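(* Let $q$ be a prime power, let $0 \le n_1 \le n$, and let ${\bf A} = ({\bf A}_1 \mid {\bf A}_2) \in \mathrm{GF}(q)^{a \times n}$ and ${\bf B} = ({\bf B}_1 \mid {\bf B}_2) \in \mathrm{GF}(q)^{b \times n}$, where ${\bf A}_1 \in \mathrm{GF}(q)^{a \times n_1}$ and ${\bf B}_1 \in \mathrm{GF}(q)^{b \times n_1}$. Then for $i = 1$ and $i=2$, $$d_{\mathrm{S}}(R({\bf A}_i), R({\bf B}_i)) \le d_{\mathrm{S}}(R({\bf A}), R({\bf B})) \quad\text{and}\quad d_{\mathrm{I}}(R({\bf A}_i), R({\bf B}_i)) \le d_{\mathrm{I}}(R({\bf A}), R({\bf B})).$$
   Context: For a matrix ${\bf M}$ over $\mathrm{GF}(q)$, $R({\bf M})$ denotes its row space. For subspaces $U,V$ of $\mathrm{GF}(q)^m$, the subspace distance is $d_{\mathrm{S}}(U,V) = \dim(U+V) - \dim(U\cap V) = 2\dim(U+V) - \dim U - \dim V$ and the injection distance is $d_{\mathrm{I}}(U,V) = \dim(U+V) - \min\{\dim U, \dim V\}$. *)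

(* Defs.v *)
From HB Require Import structures.
From mathcomp Require Import all_boot all_order all_algebra.
Set Implicit Arguments. Unset Strict Implicit. Unset Printing Implicit Defensive.
Import GRing.Theory.
Local Open Scope ring_scope.

(* Row spaces R(M) are represented (as in mxalgebra) by the matrices
   themselves: dim R(M) = \rank M, R(A)+R(B) = (A + B)%MS,
   R(A) cap R(B) = (A :&: B)%MS. *)

Definition subspace_dist (F : fieldType) (m1 m2 n : nat)
  (A : 'M[F]_(m1, n)) (B : 'M[F]_(m2, n)) : nat :=
  (\rank (A + B)%MS - \rank (A :&: B)%MS)%N.

Definition injection_dist (F : fieldType) (m1 m2 n : nat)
  (A : 'M[F]_(m1, n)) (B : 'M[F]_(m2, n)) : nat :=
  (\rank (A + B)%MS - minn (\rank A) (\rank B))%N.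

(* Main.v *)
Require Import Defs.
From HB Require Import structures.
From mathcomp Require Import all_boot all_order all_algebra.
From mathcomp Require Import zify.
Import GRing.Theory.
Local Open Scope ring_scope.

Lemma dist_mul (F : fieldType) (a b n p : nat)
  (A : 'M[F]_(a, n)) (B : 'M[F]_(b, n)) (M : 'M[F]_(n, p)) :
  (subspace_dist (A *m M) (B *m M) <= subspace_dist A B)%N /\
  (injection_dist (A *m M) (B *m M) <= injection_dist A B)%N.
Proof.
rewrite /subspace_dist /injection_dist.
have h1 := mxrank_sum_cap A B.
have h2 := mxrank_sum_cap (A *m M) (B *m M).
have h3 := mxrank_mul_ker A M.
have h4 := mxrank_mul_ker B M.
have h5 := mxrank_mul_ker (A + B)%MS M.
rewrite (addsmxMr A B M) in h5.
have h6 : (\rank (A :&: kermx M) <= \rank ((A + B)%MS :&: kermx M))%N.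
  by apply: mxrankS; apply: capmxS => //; apply: addsmxSl.
have h7 : (\rank (B :&: kermx M) <= \rank ((A + B)%MS :&: kermx M))%N.
  by apply: mxrankS; apply: capmxS => //; apply: addsmxSr.
have h8 : (\rank A <= \rank (A + B)%MS)%N by apply: mxrankS; apply: addsmxSl.
have h9 : (\rank B <= \rank (A + B)%MS)%N by apply: mxrankS; apply: addsmxSr.
have h10 : (\rank (A *m M) <= \rank (A *m M + B *m M)%MS)%N by apply: mxrankS; apply: addsmxSl.
have h11 : (\rank (B *m M) <= \rank (A *m M + B *m M)%MS)%N by apply: mxrankS; apply: addsmxSr.
split; lia.
Qed.

Theorem lemma1 (F : finFieldType) (a b n1 n2 : nat)
  (A : 'M[F]_(a, n1 + n2)) (B : 'M[F]_(b, n1 + n2)) :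
  [/\ (subspace_dist (lsubmx A) (lsubmx B) <= subspace_dist A B)%N,
      (injection_dist (lsubmx A) (lsubmx B) <= injection_dist A B)%N,
      (subspace_dist (rsubmx A) (rsubmx B) <= subspace_dist A B)%N &
      (injection_dist (rsubmx A) (rsubmx B) <= injection_dist A B)%N].
Proof.
have eL (m : nat) (X : 'M[F]_(m, n1 + n2)) : lsubmx X = X *m lsubmx 1%:M.
  by rewrite mulmx_lsub mulmx1.
have eR (m : nat) (X : 'M[F]_(m, n1 + n2)) : rsubmx X = X *m rsubmx 1%:M.
  by rewrite mulmx_rsub mulmx1.
have [l1 l2] := @dist_mul F _ _ _ _ A B (lsubmx (1%:M : 'M[F]_(n1 + n2))).
have [r1 r2] := @dist_mul F _ _ _ _ A B (rsubmx (1%:M : 'M[F]_(n1 + n2))).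
by rewrite (eL _ A) (eL _ B) (eR _ A) (eR _ B).
Qed.
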